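(* Let $S\subseteq\mathbb{N}^{\mathbb{N}}$. Suppose that for every finite sequence $g\in\mathbb{N}^{<\mathbb{N}}$ there are sequences $g_1,g_2\in\mathbb{N}^{\mathbb{N}}$, both extending $g$, with $g_1\in S$ and $g_2\notin S$. Then $S$ is not guessable.
   Context: $\mathbb{N}^{\mathbb{N}}$ is the set of all sequences $f:\mathbb{N}\to\mathbb{N}$ and $\mathbb{N}^{<\mathbb{N}}$ is the set of all finite sequences of naturals. A function $G:\mathbb{N}^{<\mathbb{N}}\to\{0,1\}$ is a guesser for $S\subseteq\mathbb{N}^{\mathbb{N}}$ if for every $f:\mathbb{N}\to\mathbb{N}$ there is some $m>0$ such that for all $n>m$, $G(f(0),\ldots,f(n))=1$ if $f\in S$ and $G(f(0),\ldots,f(n))=0$ if $f\notin S$. A set $S$ is guessable if it has a guesser. *)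

(* Defs.v *)
From Stdlib Require Import List Arith.
Import ListNotations.

Definition prefix (f : nat -> nat) (n : nat) : list nat := map f (seq 0 n).

Definition extends (f : nat -> nat) (g : list nat) : Prop :=
  forall i, i < length g -> f i = nth i g 0.

(* G : N^{<N} -> {0,1}; we encode {0,1} as bool (true = 1, false = 0). *)
Definition guesser (G : list nat -> bool) (A : (nat -> nat) -> Prop) : Prop :=
  forall f : nat -> nat, exists m, 0 < m /\
    forall n, m < n ->
      (A f -> G (prefix f (Nat.succ n)) = true) /\
      (~ A f -> G (prefix f (Nat.succ n)) = false).

Definition guessable (A : (nat -> nat) -> Prop) : Prop :=
  exists G, guesser G A.

(* Main.v *)
Require Import Defs.
From Stdlib Require Import List Arith Lia ClassicalEpsilon Classical.
Import ListNotations.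

Lemma prefix_ext (f : nat -> nat) (L : list nat) :
  (forall i, i < length L -> f i = nth i L 0) -> prefix f (length L) = L.
Proof.
  intros H. unfold prefix. apply nth_ext with (d:=0) (d':=0).
  - rewrite length_map, length_seq; auto.
  - intros n Hn. rewrite length_map, length_seq in Hn.
    rewrite nth_indep with (d':= f 0) by (rewrite length_map, length_seq; auto).
    rewrite map_nth, seq_nth by auto. simpl. apply H; auto.
Qed.

Lemma prefix_length f n : length (prefix f n) = n.
Proof. unfold prefix. rewrite length_map, length_seq. auto. Qed.

Lemma prefix_nth f n i : i < n -> nth i (prefix f n) 0 = f i.
Proof.
  intros H. unfold prefix.
  rewrite nth_indep with (d':= f 0) by (rewrite length_map, length_seq; auto).
  rewrite map_nth, seq_nth by auto. auto.
Qed.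

Lemma prefix_app f p k : extends f p -> length p <= k ->
  exists a, prefix f k = p ++ a.
Proof.
  intros He Hk. exists (skipn (length p) (prefix f k)).
  rewrite <- (firstn_skipn (length p) (prefix f k)) at 1. f_equal.
  apply nth_ext with (d:=0) (d':=0).
  - rewrite length_firstn, prefix_length. lia.
  - intros n Hn. rewrite length_firstn, prefix_length in Hn.
    rewrite nth_firstn. destruct (Nat.ltb_spec n (length p)); [|lia].
    rewrite prefix_nth by lia. apply He. lia.
Qed.

Section Diag.
Variable A : (nat -> nat) -> Prop.
Variable G : list nat -> bool.
Hypothesis HS : forall g : list nat,
     exists g1 g2 : nat -> nat,
       extends g1 g /\ extends g2 g /\ A g1 /\ ~ A g2.
Hypothesis HG : guesser G A.

Definition stepP (p : list nat) (rq : list nat * list nat) : Prop :=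
  (exists a, fst rq = p ++ a) /\ (exists b, snd rq = fst rq ++ b) /\
  length p < length (fst rq) /\ length (fst rq) < length (snd rq) /\
  G (fst rq) = true /\ G (snd rq) = false.

Lemma step_ex p : exists rq, stepP p rq.
Proof.
  destruct (HS p) as [g1 [_ [e1 [_ [s1 _]]]]].
  destruct (HG g1) as [m1 [_ Hm1]].
  set (n1 := Nat.max m1 (length p) + 1).
  destruct (Hm1 n1 ltac:(lia)) as [T1 _]. specialize (T1 s1).
  set (r := prefix g1 (S n1)).
  destruct (HS r) as [_ [g2 [_ [e2 [_ s2]]]]].
  destruct (HG g2) as [m2 [_ Hm2]].
  set (n2 := Nat.max m2 (length r) + 1).
  destruct (Hm2 n2 ltac:(lia)) as [_ T2]. specialize (T2 s2).
  exists (r, prefix g2 (S n2)). unfold stepP; cbn [fst snd].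
  assert (Lr : length r = S n1) by apply prefix_length.
  repeat split.
  - apply prefix_app; auto. lia.
  - apply prefix_app; auto. lia.
  - lia.
  - rewrite prefix_length. lia.
  - exact T1.
  - exact T2.
Qed.

Definition step (p : list nat) : list nat * list nat :=
  proj1_sig (constructive_indefinite_description _ (step_ex p)).

Lemma step_spec p : stepP p (step p).
Proof. unfold step. destruct constructive_indefinite_description; auto. Qed.

Fixpoint P (k : nat) : list nat :=
  match k with 0 => [] | S k => snd (step (P k)) end.

Lemma P_len k : k <= length (P k).
Proof.
  induction k; simpl; [lia|].
  destruct (step_spec (P k)) as [_ [_ [A1 [B _]]]]. lia.
Qed.

Lemma P_mono k j : k <= j -> exists a, P j = P k ++ a.
Proof.
  induction 1.
  - exists []. rewrite app_nil_r; auto.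
  - destruct IHle as [a Ha]. simpl.
    destruct (step_spec (P m)) as [[c Hc] [[d Hd] _]].
    exists (a ++ c ++ d). rewrite Hd, Hc, Ha. rewrite !app_assoc. auto.
Qed.

Definition f (i : nat) : nat := nth i (P (S i)) 0.

Lemma f_ok L k : (exists a, P k = L ++ a) -> prefix f (length L) = L.
Proof.
  intros [a Ha]. apply prefix_ext. intros i Hi. unfold f.
  assert (HL : i < length (P k)) by (rewrite Ha, length_app; lia).
  assert (HS' : i < length (P (S i))) by (pose proof (P_len (S i)); lia).
  destruct (Nat.le_ge_cases k (S i)) as [h|h].
  - destruct (P_mono _ _ h) as [b Hb]. rewrite Hb, app_nth1 by auto.
    rewrite Ha, app_nth1 by auto. auto.
  - destruct (P_mono _ _ h) as [b Hb].
    rewrite <- (app_nth1 (P (S i)) b) by auto. rewrite <- Hb, Ha, app_nth1 by lia. auto.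
Qed.

Lemma contra : False.
Proof.
  destruct (HG f) as [m [_ Hm]].
  set (k := m + 2).
  destruct (step_spec (P k)) as [[c Hc] [[d Hd] [A1 [B [T F]]]]].
  pose proof (P_len k).
  set (r := fst (step (P k))) in *. set (q := snd (step (P k))) in *.
  assert (Pr : prefix f (length r) = r).
  { apply (f_ok r (S k)). exists d. simpl. fold q. auto. }
  assert (Pq : prefix f (length q) = q).
  { apply (f_ok q (S k)). exists []. rewrite app_nil_r. auto. }
  destruct (length r) as [|nr] eqn:Er; [lia|].
  destruct (length q) as [|nq] eqn:Eq; [lia|].
  destruct (classic (A f)) as [s|s].
  - destruct (Hm nq ltac:(lia)) as [H1 _]. unfold Nat.succ in H1. rewrite Pq in H1. rewrite H1 in F; auto. discriminate.
  - destruct (Hm nr ltac:(lia)) as [_ H1]. unfold Nat.succ in H1. rewrite Pr in H1. rewrite H1 in T; auto. discriminate.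
Qed.
End Diag.

Theorem theorem2p2 (S : (nat -> nat) -> Prop) :
  (forall g : list nat,
     exists g1 g2 : nat -> nat,
       extends g1 g /\ extends g2 g /\ S g1 /\ ~ S g2) ->
  ~ guessable S.
Proof.
  intros HS [G HG]. exact (contra S G HS HG).
Qed.
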